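(* A game $\Gamma=(N,A,u)$ is standard symmetric if and only if there exist a matching $M$ of the strategy sets $(A_i)_{i\in N}$ and a transitive subgroup $H$ of $S_N$ such that for every $\pi\in H$ the induced game bijection $M_\pi$ is an automorphism of $\Gamma$.
   Context: A (finite normal-form) game $\Gamma=(N,A,u)$ consists of a finite set $N$ of $n\ge 2$ players, a finite non-empty strategy set $A_i$ for each $i\in N$ (all of the same cardinality), $A=\times_{i\in N}A_i$, and utility functions $u_i:A\to\mathbb{R}$. A game bijection $g=(\pi;(\tau_i)_{i\in N})$ of $\Gamma$ to itself consists of a permutation $\pi$ of $N$ and bijections $\tau_i:A_i\to A_{\pi(i)}$; $g.i=\pi(i)$, $g.s_i=\tau_i(s_i)$, and $g.s$ is the profile with $(g.s)_{\pi(i)}=\tau_i(s_i)$. An automorphism is a game bijection with $u_i(s)=u_{g.i}(g.s)$ for all $i,s$; $\operatorname{Aut}(\Gamma)$ is the group of automorphisms. A symmetry group is a subgroup $G\le\operatorname{Aut}(\Gamma)$; the stabiliser of player $i$ is $G_i=\{g\in G:g.i=i\}$. $G$ is player transitive if for all $i,j\in N$ some $g\in G$ has $g.i=j$; $G$ is strategy trivial if for every $i\in N$ and every $g\in G_i$, $g.s_i=s_i$ for all $s_i\in A_i$. $\Gamma$ is standard symmetric if it has a player transitive and strategy trivial symmetry group. A matching of $A_1,\dots,A_n$ is a set $M\subseteq\times_iA_i$ of $n$-tuples such that every element of every $A_i$ appears in exactly one tuple of $M$; it induces bijections $M_{ij}:A_i\to A_j$ sending $a_i$ to the $j$-th entry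 of the unique tuple containing $a_i$. For $\pi\in S_N$, $M_\pi$ denotes the game bijection $(\pi;(M_{i\pi(i)})_{i\in N})$. *)

(* Defs.v *)
From mathcomp Require Import all_boot all_fingroup.
From Stdlib Require Rdefinitions.
Set Implicit Arguments. Unset Strict Implicit. Unset Printing Implicit Defensive.

(* Encoding of game bijections: a game bijection g = (pi; (tau_i)_i) is
   encoded as the map on the disjoint union {i : N & A i} sending (i, a) to
   (pi i, tau_i a).  A map f on this disjoint union is a game bijection iff
   it is bijective and maps each fibre A i into a single fibre; then
   g.i = tag (f (i, a)) (for any a in A i) and (g.s)_{g.i} is the value of
   f at (i, s_i). *)

Section Games.
Variables (N : finType) (A : N -> finType).

Definition pts := {i : N & A i}.

Definition gpl (f : pts -> pts) (i : N) (a : A i) : N := tag (f (Tagged A a)).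

Definition is_gbij (f : pts -> pts) : Prop :=
  bijective f /\ (forall (i : N) (a b : A i), gpl f a = gpl f b).

Definition is_image (f : pts -> pts) (s t : forall j : N, A j) : Prop :=
  forall k : N, f (Tagged A (s k)) = Tagged A (t (gpl f (s k))).

Definition is_aut (u : forall i : N, (forall j : N, A j) -> Rdefinitions.R)
  (f : pts -> pts) : Prop :=
  is_gbij f /\
  forall (i : N) (s t : forall j : N, A j),
    is_image f s t -> u i s = u (gpl f (s i)) t.

Definition symmetry_group u (G : {group {perm pts}}) : Prop :=
  forall g, g \in G -> is_aut u g.

Definition player_transitive (G : {group {perm pts}}) : Prop :=
  forall i j : N, exists2 g, g \in G & forall a : A i, gpl g a = j.

Definition strategy_trivial (G : {group {perm pts}}) : Prop :=
  forall g, g \in G -> forall i : N, (forall a : A i, gpl g a = i) ->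
    forall a : A i, g (Tagged A a) = Tagged A a.

Definition standard_symmetric u : Prop :=
  exists G : {group {perm pts}},
    [/\ symmetry_group u G, player_transitive G & strategy_trivial G].

Definition is_matching (M : {set {dffun forall i : N, A i}}) : Prop :=
  forall (i : N) (a : A i), exists! m, m \in M /\ m i = a.

(* The game bijection M_pi = (pi; (M_{i,pi i})_i), encoded as above:
   (i, a) |-> (pi i, M_{i,pi i}(a)), where M_{ij}(a) is the j-th entry of the
   unique tuple of M containing a (the None branch is irrelevant when M is a
   matching). *)
Definition Mpi (M : {set {dffun forall i : N, A i}}) (pi : {perm N}) (x : pts) : pts :=
  let: existT i a := x in
  match [pick m in M | m i == a] with
  | Some m => Tagged A (m (pi i))
  | None => x
  end.
End Games.

(* Main.v *)
Require Import Defs.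
From mathcomp Require Import all_boot all_fingroup.
From Stdlib Require Rdefinitions.
From Stdlib Require Import FunctionalExtensionality.
Set Implicit Arguments. Unset Strict Implicit. Unset Printing Implicit Defensive.

Lemma Tagged_inj (N : finType) (A : N -> finType) i (x y : A i) :
  Tagged A x = Tagged A y -> x = y.
Proof. by move=> h; have := congr1 (tagged_as (Tagged A x)) h; rewrite !tagged_asE. Qed.

Lemma TaggedK (N : finType) (A : N -> finType) (d : forall j, A j) j (v : pts A) :
  tag v = j -> Tagged A (tagged_as (Tagged A (d j)) v) = v.
Proof. by case: v => k b /= e; subst k; rewrite tagged_asE. Qed.

Lemma M_cover (N : finType) (A : N -> finType) M : is_matching M ->
  forall x : pts A, exists2 m, m \in M & x = Tagged A (m (tag x)).
Proof. by move=> hM [i a]; case: (hM i a) => m [[mM mi] _]; exists m => //=; rewrite mi. Qed.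

Lemma Mpi_m (N : finType) (A : N -> finType) M (pi : {perm N}) m i :
  is_matching M -> m \in M -> Mpi M pi (Tagged A (m i)) = Tagged A (m (pi i)).
Proof.
move=> hM mM; rewrite /Mpi /=.
case: pickP => [m' /andP[m'M /eqP m'i] | none].
  case: (hM i (m i)) => m0 [_ u].
  by rewrite -(u m' (conj m'M m'i)) -(u m (conj mM erefl)).
by have := none m; rewrite mM eqxx.
Qed.

Lemma Mpi_inj (N : finType) (A : N -> finType) (M : {set {dffun forall i : N, A i}}) (pi : {perm N}) :
  is_matching M -> injective (Mpi M pi).
Proof.
move=> hM x y.
case: (M_cover hM x) => m mM ->; case: (M_cover hM y) => m' m'M ->.
rewrite !(Mpi_m _ _ hM) //.
move: (tag x) (tag y) => i j e.
have eij : i = j by apply: (@perm_inj _ pi); exact: (congr1 tag e).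
subst j; have := Tagged_inj e => e'.
case: (hM (pi i) (m (pi i))) => m0 [_ u].
by rewrite -(u m (conj mM erefl)) (u m' (conj m'M (esym e'))).
Qed.

Lemma dir2 (N : finType) (A : N -> finType)
  (u : forall i : N, (forall j : N, A j) -> Rdefinitions.R)
  (M : {set {dffun forall i : N, A i}}) (H : {group {perm N}}) :
  is_matching M -> [transitive H, on [set: N] | 'P] ->
  (forall pi, pi \in H -> is_aut u (Mpi M pi)) -> standard_symmetric u.
Proof.
move=> hM htr haut.
pose Mp pi := perm (@Mpi_inj _ _ M pi hM).
have MpE pi : fun_of_perm (Mp pi) = Mpi M pi by apply: functional_extensionality => x; rewrite permE.
have Mp1 : Mp 1%g = 1%g.
  apply/permP => x; rewrite permE perm1.
  by case: (M_cover hM x) => m mM ->; rewrite (Mpi_m _ _ hM mM) perm1.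
have MpM p q : (Mp p * Mp q)%g = Mp (p * q)%g.
  apply/permP => x; rewrite permM !permE.
  by case: (M_cover hM x) => m mM ->; rewrite !(Mpi_m _ _ hM mM) permM.
have gS : group_set [set Mp pi | pi in H].
  apply/group_setP; split; first by apply/imsetP; exists 1%g; rewrite ?group1.
  move=> x y /imsetP[p pH ->] /imsetP[q qH ->]; rewrite MpM.
  by apply/imsetP; exists (p * q)%g; rewrite ?groupM.
exists (Group gS); split.
- by move=> g /imsetP[p pH ->]; rewrite MpE; apply: haut.
- move=> i j; have [p pH ->] := atransP2 htr (in_setT i) (in_setT j).
  exists (Mp p); first by apply/imsetP; exists p.
  move=> a; rewrite /gpl permE.
  by case: (M_cover hM (Tagged A a)) => m mM ->; rewrite (Mpi_m _ _ hM mM).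
- move=> g /imsetP[p pH ->] i hi a.
  case: (M_cover hM (Tagged A a)) => m mM /= /Tagged_inj ->.
  have := hi (m i); rewrite /gpl MpE (Mpi_m _ _ hM mM) /= => e.
  by rewrite e.
Qed.

Lemma dir1 (N : finType) (A : N -> finType)
  (u : forall i : N, (forall j : N, A j) -> Rdefinitions.R)
  (hN : 0 < #|N|) (hA : forall i : N, 0 < #|A i|) :
  standard_symmetric u ->
  exists (M : {set {dffun forall i : N, A i}}) (H : {group {perm N}}),
    [/\ is_matching M, [transitive H, on [set: N] | 'P] &
        forall pi, pi \in H -> is_aut u (Mpi M pi)].
Proof.
case=> G [hsym htr hst].
pose d j : A j := xchoose (elimT card_gt0P (hA j)).
case/card_gt0P: hN => i0 _.
have F1 g : g \in G -> forall x y : pts A, tag x = tag y -> tag (g x) = tag (g y).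
  move=> gG [i a] [j b] /= e; subst j; exact: (hsym g gG).1.2 i a b.
have F2 g : g \in G -> forall x y : pts A, tag (g x) = tag (g y) -> tag x = tag y.
  move=> gG x y e; rewrite -[x](permK g) -[y](permK g).
  by apply: (F1); rewrite ?groupV.
have F3 g h : g \in G -> h \in G -> forall x, tag (g x) = tag (h x) ->
    forall y, tag y = tag x -> g y = h y.
  move=> gG hG x e [j b] /= ej; subst j.
  have kG : (g * h^-1)%g \in G by rewrite groupM ?groupV.
  have hyp : forall b : A (tag x), gpl (g * h^-1)%g b = tag x.
    move=> b'; rewrite /gpl permM.
    have -> : tag (h^-1%g (g (Tagged A b'))) = tag (h^-1%g (h x)).
      apply: (F1); rewrite ?groupV //; rewrite -e; exact: F1.
    by rewrite permK.
  have := hst _ kG (tag x) hyp b; rewrite permM => e2.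
  by have := congr1 h e2; rewrite permKV.
pose c j := odflt 1%g [pick g in G | [forall a : A i0, tag (g (Tagged A a)) == j]].
have cP j : c j \in G /\ forall a : A i0, tag (c j (Tagged A a)) = j.
  rewrite /c; case: pickP => [g /andP[gG /forallP h]|none] /=.
    by split=> // a; exact/eqP.
  exfalso; case: (htr i0 j) => g gG h; have := none g; rewrite gG /=.
  by move/negP; apply; apply/forallP => a; apply/eqP; exact: (h a).
pose M := [set m : {dffun forall j, A j} | [forall j, c j (Tagged A (m i0)) == Tagged A (m j)]].
have K g m j : g \in G -> m \in M ->
    g (Tagged A (m j)) = Tagged A (m (tag (g (Tagged A (m j))))).
  move=> gG; rewrite inE => /forallP mM.
  have mj l : c l (Tagged A (m i0)) = Tagged A (m l) by apply/eqP; exact: mM.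
  set k := tag _; rewrite -(mj j) -(mj k) -permM.
  apply: (F3 _ _ _ _ (Tagged A (m i0))) => //; first by rewrite groupM // (cP j).1.
    exact: (cP k).1.
  by rewrite (cP k).2 permM mj.
have hM : is_matching M.
  move=> i a.
  pose y := (c i)^-1%g (Tagged A a).
  have ty : tag y = i0.
    have := F2 _ (cP i).1 y (Tagged A (d i0)); rewrite /y permKV (cP i).2 /=.
    by apply.
  have tcy j : tag (c j y) = j.
    by rewrite (F1 _ (cP j).1 y (Tagged A (d i0))) ?(cP j).2.
  pose m : {dffun forall j, A j} := [ffun j => (tagged_as (Tagged A (d j)) (c j y) : A j)].
  have mjE j : Tagged A (m j) = c j y by rewrite ffunE; apply: TaggedK.
  have ci0 : c i0 y = y.
    have := F3 _ _ (cP i0).1 (group1 G) (Tagged A (d i0)); rewrite perm1 (cP i0).2 /=.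
    by move/(_ erefl y ty); rewrite perm1.
  exists m; split; first split.
  - by rewrite inE; apply/forallP => j; rewrite !mjE ci0.
  - by apply: Tagged_inj; rewrite mjE /y permKV.
  move=> m' []; rewrite inE => /forallP m'M m'i.
  have m'j l : c l (Tagged A (m' i0)) = Tagged A (m' l) by apply/eqP; exact: m'M.
  have ey : Tagged A (m' i0) = y.
    by apply: (@perm_inj _ (c i)); rewrite m'j m'i /y permKV.
  by apply/ffunP => j; apply: Tagged_inj; rewrite mjE -m'j ey.
pose H := [set pi : {perm N} | [exists g in G, [forall x, tag (g x) == pi (tag x)]]].
have gH : group_set H.
  apply/group_setP; split.
    by rewrite inE; apply/existsP; exists 1%g; rewrite group1 /=; apply/forallP => x; rewrite !perm1.
  move=> p q; rewrite !inE => /existsP[g /andP[gG /forallP hg]] /existsP[h /andP[hG /forallP hh]].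
  apply/existsP; exists (g * h)%g; rewrite groupM //=; apply/forallP => x.
  by rewrite !permM (eqP (hh _)) (eqP (hg _)).
exists M, (Group gH); split => //.
- apply/imsetP; exists i0 => //; apply/setP => j; rewrite in_setT; apply/esym/orbitP.
  have finj : injective (fun i => tag (c j (Tagged A (d i)))).
    by move=> i i' e; exact: (F2 _ (cP j).1 _ _ e).
  exists (perm finj); last by rewrite /= /aperm permE (cP j).2.
  rewrite /= inE; apply/existsP; exists (c j); rewrite (cP j).1 /=; apply/forallP => x.
  by rewrite permE; apply/eqP; apply: (F1); [exact: (cP j).1|].
- move=> pi; rewrite /= inE => /existsP[g /andP[gG /forallP hg]].
  have -> : Mpi M pi = fun_of_perm g; last exact: hsym.
  apply: functional_extensionality => x.
  case: (M_cover hM x) => m mM ->; rewrite (Mpi_m _ _ hM mM) (K g m _ gG mM).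
  by rewrite (eqP (hg _)).
Qed.

Theorem mainTheorem11 (N : finType) (A : N -> finType)
  (u : forall i : N, (forall j : N, A j) -> Rdefinitions.R)
  (hN : 2 <= #|N|) (hA : forall i : N, 0 < #|A i|)
  (hAcard : forall i j : N, #|A i| = #|A j|) :
  standard_symmetric u <->
  exists (M : {set {dffun forall i : N, A i}}) (H : {group {perm N}}),
    [/\ is_matching M, [transitive H, on [set: N] | 'P] &
        forall pi, pi \in H -> is_aut u (Mpi M pi)].
Proof.
split; first by apply: dir1 => //; exact: ltnW.
by case=> M [H [hM htr ha]]; exact: (dir2 hM htr ha).
Qed.
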